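(* Under the degree-corrected stochastic block model $DCSBM(n,P,\Theta,Z)$ with regularizer $\tau\ge0$, the matrix $\tilde X^*$ has exactly $K$ distinct rows, and for any nodes $i\ne j$ with $g_i=g_j$, the $i$-th row of $\tilde X^*$ equals the $j$-th row of $\tilde X^*$.
   Context: $n$ nodes, each in exactly one of $K$ nonempty communities, $g_i$ the community of node $i$; $Z\in\{0,1\}^{n\times K}$ with $Z_{ik}=1$ iff $g_i=k$. $P$ is a $K\times K$ symmetric, nonnegative, nonsingular, irreducible matrix; $\theta\in\mathbb{R}^n$ has positive entries, $\Theta=\mathrm{diag}(\theta)$, $\Omega=\Theta ZPZ'\Theta$. Let $\mathscr D$ be diagonal with $\mathscr D_{ii}=\sum_{j=1}^n\Omega_{ij}$, $\mathscr D_\tau=\mathscr D+\tau I$, $\mathscr L_\tau=\mathscr D_\tau^{-1/2}\Omega\mathscr D_\tau^{-1/2}$, and let $N^{\mathscr L_\tau}$ be the column-normalized matrix of $\mathscr L_\tau$ (its $i$-th column is the $i$-th column of $\mathscr L_\tau$ divided by its Euclidean norm). $N^{\mathscr L_\tau}$ has exactly $K$ nonzero eigenvalues, all real. Let $E_{N^{\mathscr L_\tau}}$ be the $K\times K$ diagonal matrix of these nonzero eigenvalues and $V_{N^{\mathscr L_\tau}}$ the $n\times K$ matrix of corresponding unit-norm right eigenvectors; $\tilde X=V_{N^{\mathscr L_\tau}}E_{N^{\mathscr L_\tau}}$, and $\tilde X^*$ is obtained by normalizing each row of $\tilde X$ to unit Euclidean norm. *)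

(* Defs.v *)
From HB Require Import structures.
From mathcomp Require Import all_boot all_order all_algebra.
From mathcomp Require Import reals.
Set Implicit Arguments. Unset Strict Implicit. Unset Printing Implicit Defensive.
Import Order.TTheory GRing.Theory Num.Theory.
Local Open Scope ring_scope.

Section DCSBM.
Variable R : realType.

Definition memb_mx (n K : nat) (g : 'I_n -> 'I_K) : 'M[R]_(n, K) :=
  \matrix_(i, k) (g i == k)%:R.

Definition mxpow (K : nat) (P : 'M[R]_K) (m : nat) : 'M[R]_K :=
  iter m (fun A => P *m A) 1%:M.
Definition irreducible_mx (K : nat) (P : 'M[R]_K) : Prop :=
  forall i j : 'I_K, exists m : nat, 0 < mxpow P m i j.

Definition Omega_mx (n K : nat) (P : 'M[R]_K) (theta : 'rV[R]_n)
  (g : 'I_n -> 'I_K) : 'M[R]_n :=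
  diag_mx theta *m memb_mx g *m P *m (memb_mx g)^T *m diag_mx theta.

Definition deg_vec (n : nat) (Om : 'M[R]_n) : 'rV[R]_n :=
  \row_i \sum_(j < n) Om i j.
Definition Dtau_invsqrt (n : nat) (Om : 'M[R]_n) (tau : R) : 'M[R]_n :=
  diag_mx (\row_i (Num.sqrt (deg_vec Om 0 i + tau))^-1).

Definition Ltau (n : nat) (Om : 'M[R]_n) (tau : R) : 'M[R]_n :=
  Dtau_invsqrt Om tau *m Om *m Dtau_invsqrt Om tau.

Definition col_normalize (m n : nat) (A : 'M[R]_(m, n)) : 'M[R]_(m, n) :=
  \matrix_(i, j) (A i j / Num.sqrt (\sum_(k < m) A k j ^+ 2)).

Definition row_normalize (m n : nat) (A : 'M[R]_(m, n)) : 'M[R]_(m, n) :=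
  \matrix_(i, j) (A i j / Num.sqrt (\sum_(k < n) A i k ^+ 2)).

Definition num_distinct_rows (m n : nat) (A : 'M[R]_(m, n)) : nat :=
  size (undup [seq row i A | i <- enum 'I_m]).

End DCSBM.

(* Main.v *)
Require Import Defs.
From HB Require Import structures.
From mathcomp Require Import all_boot all_order all_algebra.
From mathcomp Require Import reals ring lra.
Import Order.TTheory GRing.Theory Num.Theory.
Local Open Scope ring_scope.

Lemma sum_pick (R : realType) (K : nat) (a : 'I_K) (F : 'I_K -> R) :
  \sum_(k < K) (a == k)%:R * F k = F a.
Proof.
rewrite (bigD1 a) //= eqxx mul1r big1 ?addr0 // => k /negbTE.
by rewrite eq_sym => ->; rewrite mul0r.
Qed.

Lemma memb_mid (R : realType) n K (P : 'M[R]_K) (g : 'I_n -> 'I_K) i j :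
  (memb_mx R g *m P *m (memb_mx R g)^T) i j = P (g i) (g j).
Proof.
rewrite mxE.
under eq_bigr => l _ do rewrite !mxE.
under eq_bigr => l _ do under eq_bigr => k _ do rewrite mxE.
under eq_bigr => l _ do rewrite sum_pick mulrC.
by rewrite sum_pick.
Qed.

Lemma Omega_E (R : realType) n K (P : 'M[R]_K) theta (g : 'I_n -> 'I_K) i j :
  Omega_mx P theta g i j = theta 0 i * P (g i) (g j) * theta 0 j.
Proof.
rewrite /Omega_mx mul_mx_diag mxE -!mulmxA mul_diag_mx mxE !mulmxA memb_mid.
by [].
Qed.

Theorem lemma6 (R : realType) (n K : nat) (g : 'I_n -> 'I_K)
  (P : 'M[R]_K) (theta : 'rV[R]_n) (tau : R)
  (lambda : 'rV[R]_K) (V : 'M[R]_(n, K)) :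
  (* each community is nonempty *)
  (forall k : 'I_K, exists i : 'I_n, g i = k) ->
  (* P symmetric, nonnegative, nonsingular, irreducible *)
  P^T = P ->
  (forall k l, 0 <= P k l) ->
  P \in unitmx ->
  irreducible_mx P ->
  (* theta positive, tau >= 0 *)
  (forall i, 0 < theta 0 i) ->
  0 <= tau ->
  let N := col_normalize (Ltau (Omega_mx P theta g) tau) in
  (* lambda lists the K nonzero eigenvalues of N (with algebraic multiplicity) *)
  char_poly N = 'X ^+ (n - K) * \prod_(k < K) ('X - (lambda 0 k)%:P) ->
  (forall k, lambda 0 k != 0) ->
  (* V : unit-norm right eigenvectors for these eigenvalues, linearly independent *)
  (forall k, N *m col k V = lambda 0 k *: col k V) ->
  (forall k, \sum_(i < n) V i k ^+ 2 = 1) ->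
  \rank V = K ->
  let Xt := V *m diag_mx lambda in
  let Xs := row_normalize Xt in
  num_distinct_rows Xs = K /\
  (forall i j : 'I_n, i != j -> g i = g j -> row i Xs = row j Xs).
Proof.
move=> Hcomm HPsym HPnn HPu Hirr Htheta Htau N Hchar Hlam Heig Hnorm Hrank Xt Xs.
pose Om := Omega_mx P theta g.
pose s := fun i => (Num.sqrt (deg_vec Om 0 i + tau))^-1.
pose a := fun i => theta 0 i * s i.
pose cn := fun j => Num.sqrt (\sum_(k < n) Ltau Om tau k j ^+ 2).
pose b := fun j => theta 0 j * s j / cn j.
have HL : forall i j, Ltau Om tau i j = s i * Om i j * s j.
  move=> i j; rewrite /Ltau /Dtau_invsqrt mul_mx_diag mxE mul_diag_mx mxE.
  by congr (_ * _ * _); rewrite mxE.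
have HN : forall i j, N i j = a i * (P (g i) (g j) * b j).
  move=> i j; rewrite /N /col_normalize mxE -/Om -/(cn j) HL /Om Omega_E /a /b.
  ring.
have Prow : forall k, exists l, 0 < P k l.
  move=> k; case: (boolP [exists l, 0 < P k l]) => [/existsP//|/existsPn H].
  have Z l : P k l = 0 by apply/eqP; rewrite eq_le HPnn andbT leNgt H.
  have := congr1 (fun M : 'M[R]_K => M k k) (mulmxV HPu); rewrite !mxE eqxx big1 => [|l _]; last by rewrite Z mul0r.
  by move/eqP; rewrite eq_sym oner_eq0.
have Hdeg : forall i, 0 < deg_vec Om 0 i + tau.
  move=> i; have [l Hl] := Prow (g i); have [j0 Hj0] := Hcomm l.
  rewrite mxE (bigD1 j0) //= /Om Omega_E Hj0.
  have h1 : 0 < theta 0 i * P (g i) l * theta 0 j0 by rewrite !mulr_gt0.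
  have h2 : 0 <= \sum_(j < n | j != j0) Omega_mx P theta g i j.
    by apply: sumr_ge0 => j _; rewrite Omega_E !mulr_ge0 // ltW.
  lra.
have Ha : forall i, 0 < a i.
  by move=> i; rewrite /a mulr_gt0 // invr_gt0 sqrtr_gt0.
pose U : 'M[R]_K := \matrix_(k, c) ((lambda 0 c)^-1 * \sum_(j < n) P k (g j) * b j * V j c).
have HV : forall i c, V i c = a i * U (g i) c.
  move=> i c.
  have E : \sum_j N i j * V j c = lambda 0 c * V i c.
    have := congr1 (fun M : 'cV[R]_n => M i 0) (Heig c); rewrite !mxE.
    by move=> <-; apply: eq_bigr => j _; rewrite [col _ _ _ _]mxE.
  rewrite mxE -[V i c](mulKf (Hlam c)) -E mulrCA; congr (_ * _).
  rewrite mulr_sumr; apply: eq_bigr => j _; rewrite HN; ring.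

pose A' : 'M[R]_(n, K) := \matrix_(i, k) (a i * (g i == k)%:R).
have HVe : V = A' *m U.
  apply/matrixP => i c; rewrite [RHS]mxE HV.
  under eq_bigr do rewrite mxE -mulrA.
  by rewrite -mulr_sumr sum_pick.
have HU : U \in unitmx.
  rewrite -row_free_unit /row_free; apply/eqP/anti_leq.
  by rewrite rank_leq_row /= -{1}Hrank HVe mxrankM_maxr.
pose W := U *m diag_mx lambda.
have HW : W \in unitmx.
  rewrite unitmx_mul HU unitmxE det_diag unitfE /=.
  by apply/prodf_neq0 => k _; exact: Hlam.
have HWW := mulmxV HW.
pose Y := row_normalize W.
have HXt : forall i j, Xt i j = a i * W (g i) j.
  by move=> i j; rewrite /Xt /W !mul_mx_diag [LHS]mxE [in RHS]mxE HV mulrA.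
clearbody W.
have HXs : forall i j, Xs i j = Y (g i) j.
  move=> i j; rewrite /Xs /Y /row_normalize [LHS]mxE [in RHS]mxE HXt.
  under eq_bigr do rewrite HXt exprMn.
  rewrite -mulr_sumr sqrtrM ?sqr_ge0 // sqrtr_sqr gtr0_norm // invfM mulrACA.
  by rewrite mulfV ?mul1r // (negbT (gt_eqF (Ha i))).
have Hrows : forall i, row i Xs = row (g i) Y.
  by move=> i; apply/rowP => j; rewrite [LHS]mxE [RHS]mxE HXs.
split; last by move=> i j _ Hg; rewrite !Hrows Hg.
have HWrow : forall k, 0 < \sum_(j < K) W k j ^+ 2.
  move=> k; rewrite lt_def sumr_ge0 ?andbT => [|j _]; last exact: sqr_ge0.
  apply/negP; rewrite psumr_eq0 => [|j _]; last exact: sqr_ge0.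
  move/allP => H.
  have Wk0 j : W k j = 0.
    by apply/eqP; rewrite -sqrf_eq0; apply: (implyP (H j (mem_index_enum j))).
  have := congr1 (fun M : 'M[R]_K => M k k) HWW; rewrite !mxE eqxx big1 => [|j _]; last by rewrite Wk0 mul0r.
  by move/eqP; rewrite eq_sym oner_eq0.
have Yinj : injective (fun k => row k Y).
  move=> k l /= /rowP Hkl; case: (eqVneq k l) => // Hne; exfalso.
  pose Sk := Num.sqrt (\sum_(j < K) W k j ^+ 2).
  pose Sl := Num.sqrt (\sum_(j < K) W l j ^+ 2).
  have Sk0 : Sk != 0 by rewrite (negbT (gt_eqF _)) // sqrtr_gt0.
  have Sl0 : Sl != 0 by rewrite (negbT (gt_eqF _)) // sqrtr_gt0.
  have Wkl j : W k j = Sk / Sl * W l j.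
    have := Hkl j; rewrite !mxE -/Sk -/Sl => E.
    by rewrite -[W k j](mulfVK Sk0) E; ring.
  have E1 : (W *m invmx W) k k = Sk / Sl * (W *m invmx W) l k.
    rewrite !mxE mulr_sumr; apply: eq_bigr => j _; by rewrite Wkl mulrA.
  move: E1; rewrite HWW !mxE eqxx [l == k]eq_sym (negbTE Hne) /= mulr0.
  by move/eqP; rewrite oner_eq0.
rewrite /num_distinct_rows.
have -> : [seq row i Xs | i <- enum 'I_n] = [seq row k Y | k <- map g (enum 'I_n)].
  by rewrite -map_comp; apply: eq_map => i /=; rewrite Hrows.
have Hperm : perm_eq (undup [seq row k Y | k <- map g (enum 'I_n)]) [seq row k Y | k <- enum 'I_K].
  apply: uniq_perm; first exact: undup_uniq.
    by rewrite (map_inj_uniq Yinj) enum_uniq.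
  move=> r; rewrite mem_undup; apply/mapP/mapP => [[k Hk ->]|[k _ ->]].
    by exists k; rewrite ?mem_enum.
  have [i0 Hi0] := Hcomm k; exists k => //.
  by rewrite -Hi0 map_f // mem_enum.
by rewrite (perm_size Hperm) size_map size_enum_ord.
Qed.
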